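(* Let $X$ be a regular Lusin space and let $f:X\to\mathbb{R}$ be quasicontinuous. Then the set $D_f=\{x\in X: f \text{ is discontinuous at } x\}$ is countable.
   Context: All spaces are assumed regular. A Hausdorff space $X$ is a Lusin space (in the sense of Kunen) if (a) every nowhere dense subset of $X$ is countable, (b) $X$ has at most countably many isolated points, and (c) $X$ is uncountable. A function $f:X\to Y$ is quasicontinuous if for every $x\in X$, every open $V\ni f(x)$ and every open $U\ni x$ there is a nonempty open $W\subseteq U$ with $f(W)\subseteq V$. *)

(* Defs.v *)
From HB Require Import structures.
From mathcomp Require Import all_boot all_order all_algebra.
From mathcomp Require Import all_classical all_reals all_analysis.
Set Implicit Arguments. Unset Strict Implicit. Unset Printing Implicit Defensive.
Import Order.TTheory GRing.Theory Num.Theory.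
Local Open Scope classical_set_scope.

Definition nowhere_dense (T : topologicalType) (A : set T) : Prop :=
  (closure A)^° = set0.

(* Lusin space in the sense of Kunen (Hausdorff assumed separately). *)
Definition lusin_space (T : topologicalType) : Prop :=
  [/\ (forall A : set T, nowhere_dense A -> countable A),
      countable [set x : T | isolated setT x] &
      ~ countable [set: T]].

Definition quasicontinuous (T U : topologicalType) (f : T -> U) : Prop :=
  forall (x : T) (V : set U) (O : set T),
    open V -> V (f x) -> open O -> O x ->
    exists W : set T, [/\ open W, W !=set0, W `<=` O & f @` W `<=` V].

(* Main.v *)
Require Import Defs.
From HB Require Import structures.
From mathcomp Require Import all_boot all_order all_algebra.
From mathcomp Require Import all_classical all_reals all_analysis.
From mathcomp Require Import ring lra.
Import numFieldNormedType.Exports.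
Local Open Scope classical_set_scope.
Local Open Scope ring_scope.
Import Order.TTheory GRing.Theory Num.Theory.

Section S.
Variables (R : realType) (X : topologicalType) (f : X -> R).

Definition Aset (n : nat) : set X :=
  [set x | forall O, open O -> O x -> exists y z, [/\ O y, O z &
      (n.+1%:R^-1 <= `|f y - f z|)%R]].

Lemma Aset_nd n : quasicontinuous f -> nowhere_dense (Aset n).
Proof.
move=> qc; rewrite /nowhere_dense; apply/seteqP; split => x //= hx.
exfalso.
have [U [oU Ux] sU] : exists2 U, open_nbhs x U & U `<=` closure (Aset n).
  by move: hx; rewrite /interior nbhsE.
set e : R := n.+1%:R^-1.
have e0 : (0 < e)%R by rewrite /e invr_gt0 ltr0n.
have e30 : 0 < e / 3 by rewrite divr_gt0.
have [W [oW [w Ww] WU fW]] := qc x (ball (f x) (e / 3)) U (@ball_open _ _ _ _) (ballxx _ e30) oU Ux.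
have := sU _ (WU _ Ww); rewrite /closure /= => /(_ W).
case; first by apply: open_nbhs_nbhs; split.
move=> a [Aa Wa].
have [y [z [Wy Wz]]] := Aa W oW Wa.
have /= := fW (f y) (ex_intro2 _ _ y Wy erefl).
have /= := fW (f z) (ex_intro2 _ _ z Wz erefl).
rewrite /ball /= => hz hy.
rewrite -/e => hyz.
have : (`|f y - f z| < e)%R.
  rewrite (_ : f y - f z = (f x - f z) - (f x - f y))%R; last by ring.
  apply: (le_lt_trans (ler_normB _ _)).
  have : (`|f x - f z| + `|f x - f y| < e / 3 + e / 3)%R by apply: ltrD.
  move/lt_le_trans; apply.
  by lra.
by rewrite ltNge hyz.
Qed.
End S.

Theorem corollary3p5 (R : realType) (X : topologicalType) (f : X -> R) :
  hausdorff_space X -> regular_space X -> lusin_space X ->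
  quasicontinuous f ->
  countable [set x : X | ~ {for x, continuous f}].
Proof.
move=> _ _ [Hnd _ _] qc.
have sub : [set x : X | ~ {for x, continuous f}] `<=` \bigcup_(n in [set: nat]) @Aset R X f n.
  move=> x /= ncont; apply: contrapT => hA; apply: ncont.
  apply/cvgrPdist_lt => eps eps0.
  case: (near_infty_natSinv_lt (PosNum eps0)) => N _ HN.
  have hN := HN N (leqnn N).
  have : ~ @Aset R X f N x by move=> h; apply: hA; exists N.
  rewrite /Aset /=; move=> /existsNP [Op /not_implyP [oOp /not_implyP [Ox H]]].
  apply: (filterS _ (open_nbhs_nbhs (conj oOp Ox))) => t Ot.
  rewrite ltNge; apply/negP => Hle; apply: H; exists x; exists t; split => //.
  exact: le_trans (ltW hN) Hle.
apply: (sub_countable (subset_card_le sub)).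
apply: bigcup_countable; first exact: subset_card_le.
move=> n _; apply: Hnd; exact: Aset_nd.
Qed.
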